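(* Let $N=2^n$. For any pixel indices $(j,k)$ and $(j,k+1)$ in $\{1,\dots,N\}^2$, there are at most $6n$ discrete bivariate Haar wavelets $\mathbf{h}$ which are not constant on these indices, i.e. for which $\mathbf{h}_{j,k}\ne\mathbf{h}_{j,k+1}$.
   Context: Haar system: $H^0=\mathbf{1}_{[0,1)}$, $H^1=\mathbf{1}_{[0,1/2)}-\mathbf{1}_{[1/2,1)}$; for $e=(e_1,e_2)\in\{(0,1),(1,0),(1,1)\}$, $H^e(u,v)=H^{e_1}(u)H^{e_2}(v)$ and $H^e_{p,q}(x)=2^pH^e(2^px-q)$ for $p\ge0$, $q\in\mathbb{Z}^2\cap2^p[0,1)^2$. Identifying $\mathbf{X}\in\mathbb{C}^{N\times N}$ with the function on $[0,1)^2$ equal to $NX_{j,k}$ on $[\frac{j-1}{N},\frac jN)\times[\frac{k-1}{N},\frac kN)$, the discrete bivariate Haar wavelets are the images $\mathbf{h}^e_{p,q}$ corresponding to $H^e_{p,q}$ with $0\le p\le n-1$ (together with the constant image they form an orthonormal basis of $\mathbb{C}^{N\times N}$). *)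

(* Defs.v *)
From HB Require Import structures.
From mathcomp Require Import all_boot all_order all_algebra.
Set Implicit Arguments. Unset Strict Implicit. Unset Printing Implicit Defensive.
Import Order.TTheory GRing.Theory Num.Theory.
Local Open Scope ring_scope.

Section Haar.
Variable R : realFieldType.

Definition H0 (t : R) : R := if (0 <= t) && (t < 1) then 1 else 0.
Definition H1 (t : R) : R :=
  (if (0 <= t) && (t < 1/2) then 1 else 0) - (if (1/2 <= t) && (t < 1) then 1 else 0).

Definition Huni (b : bool) : R -> R := if b then H1 else H0.

Definition Hbiv (e : bool * bool) (u v : R) : R := Huni e.1 u * Huni e.2 v.

Definition Hpq (e : bool * bool) (p : nat) (q : nat * nat) (x1 x2 : R) : R :=
  2 ^+ p * Hbiv e (2 ^+ p * x1 - q.1%:R) (2 ^+ p * x2 - q.2%:R).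

(* Discrete wavelet image h^e_{p,q} in R^{N x N}, N = 2^n, with 0-based pixel
   indices (j,k) (pixel [j/N,(j+1)/N) x [k/N,(k+1)/N)).  The function H^e_{p,q}
   (p <= n-1) is constant on each pixel, equal to N * h_{j,k}; we evaluate it at
   the lower-left corner of the pixel. *)
Definition haar_img (n : nat) (e : bool * bool) (p : nat) (q : nat * nat)
  (j k : nat) : R :=
  (2 ^+ n)^-1 * Hpq e p q (j%:R / 2 ^+ n) (k%:R / 2 ^+ n).

End Haar.

(* Index type of candidate wavelets for N = 2^n: (e, p, q) with p < n and
   q in 'I_N x 'I_N; validity: e <> (0,0) and q in Z^2 \cap 2^p [0,1)^2. *)
Definition haar_index (n : nat) : finType :=
  ((bool * bool) * 'I_n * ('I_(2 ^ n) * 'I_(2 ^ n)))%type.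

Definition haar_valid (n : nat) (w : haar_index n) : bool :=
  let: (e, p, q) := w in
  [&& e != (false, false), (q.1 < 2 ^ p)%N & (q.2 < 2 ^ p)%N].

Definition haar_of (R : realFieldType) (n : nat) (w : haar_index n) (j k : nat) : R :=
  let: (e, p, q) := w in haar_img R n e p (val q.1, val q.2) j k.

(* Main.v *)
Require Import Defs.
From HB Require Import structures.
From mathcomp Require Import all_boot all_order all_algebra.
From mathcomp Require Import ring lra.
Import Order.TTheory GRing.Theory Num.Theory.
Local Open Scope ring_scope.

Lemma Huni_supp (R : realFieldType) b (t : R) : Huni b t != 0 -> 0 <= t /\ t < 1.
Proof.
case: b; rewrite /Huni /H0 /H1.
- case: ifP => [/andP[a c]|na]; case: ifP => [/andP[c' d]|nc] => h.
  + split=> //.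
  + split=> //; apply: (lt_trans c); rewrite ltr_pdivrMr // mul1r ltr1n //.
  + split=> //; apply: le_trans c'; by rewrite divr_ge0.
  + by move: h; rewrite subrr eqxx.
- by case: ifP => [/andP[a c]|_] //; rewrite eqxx.
Qed.

Lemma floor_nat (R : realFieldType) (q x m : nat) :
  0 <= x%:R / 2^+m - q%:R :> R -> x%:R / 2^+m - q%:R < 1 :> R -> q = (x %/ 2^m)%N.
Proof.
have h2 : 0 < 2^+m :> R by exact: exprn_gt0.
rewrite subr_ge0 ler_pdivlMr // ltrBlDr ltr_pdivrMr // => h1 h3.
have e : 2^+m = (2^m)%:R :> R by rewrite natrX.
rewrite e -natrM ler_nat in h1.
rewrite e nat1r -natrM ltr_nat in h3.
apply/eqP; rewrite eqn_leq; apply/andP; split.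
  by rewrite leq_divRL ?expn_gt0.
by rewrite -ltnS ltn_divLR ?expn_gt0.
Qed.

Lemma scale_eq (R : realFieldType) (n p : nat) (x : nat) : (p < n)%N ->
  2^+p * (x%:R / 2^+n) = x%:R / 2^+(n-p) :> R.
Proof.
move=> hp; rewrite -[in 2^+n](subnKC (ltnW hp)) exprD.
have h1 : 2^+p != 0 :> R by rewrite expf_neq0 // pnatr_eq0.
have h2 : 2^+(n-p) != 0 :> R by rewrite expf_neq0 // pnatr_eq0.
by field; rewrite h1 h2.
Qed.

Lemma prod_diff (R : realFieldType) (X Y A B B' : R) :
  X * (Y * (A * B)) != X * (Y * (A * B')) -> A != 0 /\ (B != 0 \/ B' != 0).
Proof.
have [->|hA] := eqVneq A 0; first by rewrite !mul0r mulr0 eqxx.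
have [->|hB] := eqVneq B 0; last by move=> _; split; [|left].
have [->|hB'] := eqVneq B' 0; first by rewrite eqxx.
by move=> _; split; [|right].
Qed.

Lemma mem_facts (R : realFieldType) (n : nat) (e : bool*bool) (p : nat) (a b j k : nat) : (p < n)%N ->
  haar_img R n e p (a, b) j k != haar_img R n e p (a, b) j k.+1 ->
  a = (j %/ 2^(n-p))%N /\ (b = (k %/ 2^(n-p))%N \/ b = (k.+1 %/ 2^(n-p))%N).
Proof.
move=> hp; rewrite /haar_img /Hpq /Hbiv /= => /prod_diff [hA hB].
move/Huni_supp: hA; rewrite scale_eq // => -[h1 h2]; split; first exact: floor_nat h1 h2.
case: hB => /Huni_supp; rewrite scale_eq // => -[h3 h4].
  by left; exact: floor_nat h3 h4.
by right; exact: floor_nat h3 h4.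
Qed.

Definition code_nat (e : bool * bool) : nat := (e.1 + 2 * e.2 - 1)%N.

Theorem lemma9 (R : realFieldType) (n : nat) (j k : 'I_(2 ^ n))
  (hk : (k.+1 < 2 ^ n)%N) :
  (#|[set w : haar_index n |
      haar_valid w && (haar_of R w j k != haar_of R w j k.+1)]| <= 6 * n)%N.
Proof.
set A := [set w : haar_index n | _].
pose f (w : haar_index n) : 'I_3 * 'I_n * bool :=
  let: (e, p, q) := w in (inord (code_nat e), p, val q.2 == (k %/ 2^(n-p))%N).
have inj : {in A &, injective f}.
  move=> [[e p] [q1 q2]] [[e' p'] [q1' q2']].
  rewrite !inE /= => /andP[/and3P[he _ _] d] /andP[/and3P[he' _ _] d'].
  case=> ec ep eb.
  have ee : e = e'.
    have : code_nat e = code_nat e'.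
      move/(congr1 val): ec => /=; rewrite !inordK //.
        by move: he'; clear; case: e' => [[] []].
      by move: he; clear; case: e => [[] []].
    by move: he he'; clear; case: e => [[] []]; case: e' => [[] []].
  subst e' p'.
  have [a1 hb1] := @mem_facts R _ _ _ _ _ _ _ (ltn_ord p) d.
  have [a2 hb2] := @mem_facts R _ _ _ _ _ _ _ (ltn_ord p) d'.
  have e2 : nat_of_ord q2 = nat_of_ord q2'.
    case: hb1 => b1; case: hb2 => b2; rewrite ?b1 ?b2 //; idtac.
    - by move: eb; rewrite b1 b2 eqxx => /esym/eqP.
    - by move: eb; rewrite b1 b2 eqxx => /eqP.
  by congr (_, _, (_, _)); apply: val_inj; rewrite /= ?a1 ?a2.
rewrite -(card_in_imset inj).
apply: leq_trans (max_card _) _.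
by rewrite !card_prod !card_ord card_bool mulnC mulnA.
Qed.
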